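(* Let $s\in(1,2]$ and let $\alpha$ be a cardinal number with $\alpha\geq\aleph_0$. Then none of the sets $H_s[0,1]=\{f\in C[0,1]:\dim_H G_f([0,1])=s\}$, $\overline{B}_s[0,1]=\{f\in C[0,1]:\overline{\dim}_B G_f([0,1])=s\}$, $\underline{B}_s[0,1]=\{f\in C[0,1]:\underline{\dim}_B G_f([0,1])=s\}$ and $B_s[0,1]=\{f\in C[0,1]:\dim_B G_f([0,1])=s\}$ is $(\alpha,\beta)$-spaceable, for any cardinal number $\beta$.
   Context: $C[0,1]$ is the real Banach space of real-valued continuous functions on $[0,1]$ with the maximum norm. $G_f(X)=\{(x,f(x)):x\in X\}$. $\dim_H$, $\overline{\dim}_B$, $\underline{\dim}_B$, $\dim_B$ denote Hausdorff, upper box, lower box and box dimension ($\dim_B$ being defined when lower and upper box dimensions coincide). For cardinals $\alpha<\beta$, a subset $A$ of a topological vector space is $\alpha$-lineable if there is an $\alpha$-dimensional subspace $M\subseteq A\cup\{0\}$, and $(\alpha,\beta)$-spaceable if it is $\alpha$-lineable and every $\alpha$-dimensional subspace $W_\alpha\subseteq A\cup\{0\}$ is contained in a closed $\beta$-dimensional subspace $W_\beta\subseteq A\cup\{0\}$. *)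

(* Defs.v *)
From HB Require Import structures.
From mathcomp Require Import all_boot all_order all_algebra.
From mathcomp Require Import all_classical all_reals all_analysis.
Set Implicit Arguments. Unset Strict Implicit. Unset Printing Implicit Defensive.
Import Order.TTheory GRing.Theory Num.Theory.
Import numFieldNormedType.Exports.
Local Open Scope classical_set_scope.
Local Open Scope ring_scope.

Section Defs.
Variable R : realType.

Definition dist2 (p q : R * R) : R :=
  Num.sqrt ((p.1 - q.1) ^+ 2 + (p.2 - q.2) ^+ 2).

Definition diam (U : set (R * R)) : \bar R :=
  if pselect (U = set0) then 0%E
  else ereal_sup [set (dist2 pq.1 pq.2)%:E | pq in U `*` U].

Definition diam_pow (U : set (R * R)) (s : R) : \bar R :=
  if pselect (U = set0) then 0%E
  else match diam U with
       | r%:E => (r `^ s)%:E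
       | +oo%E => +oo%E
       | -oo%E => 0%E
       end.

Definition hausdorff_delta (s delta : R) (F : set (R * R)) : \bar R :=
  ereal_inf [set (\sum_(0 <= i <oo) diam_pow (U i) s)%E
            | U in [set U : nat -> set (R * R) |
                    F `<=` \bigcup_i U i /\ forall i, (diam (U i) <= delta%:E)%E]].

(* s-dimensional Hausdorff measure: limit as delta -> 0+ (= sup over delta > 0) *)
Definition hausdorff_measure (s : R) (F : set (R * R)) : \bar R :=
  ereal_sup [set hausdorff_delta s delta F | delta in `]0, +oo[].

Definition dimH (F : set (R * R)) : \bar R :=
  ereal_inf [set s%:E | s in [set s : R | 0 <= s /\ hausdorff_measure s F = 0%E]].

Definition cover_number (delta : R) (F : set (R * R)) : \bar R :=
  ereal_inf [set (n%:R)%:E | n in [set n : nat | exists U : nat -> set (R * R),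
      F `<=` \bigcup_(i in `I_n) U i /\ forall i, (i < n)%N -> (diam (U i) <= delta%:E)%E]].

Definition box_ratio (F : set (R * R)) (delta : R) : \bar R :=
  match cover_number delta F with
  | r%:E => (ln r / - ln delta)%:E
  | _ => +oo%E
  end.

(* upper box dimension: limsup_{delta -> 0+} of box_ratio *)
Definition upper_box_dim (F : set (R * R)) : \bar R :=
  ereal_inf [set ereal_sup [set box_ratio F delta | delta in `]0, e[] | e in `]0, 1[].

(* lower box dimension: liminf_{delta -> 0+} of box_ratio *)
Definition lower_box_dim (F : set (R * R)) : \bar R :=
  ereal_sup [set ereal_inf [set box_ratio F delta | delta in `]0, e[] | e in `]0, 1[].

(* An element of C[0,1] is represented by its (unique) extension to R that is
   constant on ]-oo,0] and on [1,+oo[; this is a linear bijection between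
   C[0,1] and the set C01 below, and the max norm on [0,1] is preserved. *)
Definition C01 : set (R -> R) :=
  [set f : R -> R | continuous f /\ (forall x : R, x <= 0 -> f x = f 0)
                        /\ (forall x : R, 1 <= x -> f x = f 1)].

Definition zerof : R -> R := fun _ => 0.

Definition graph (f : R -> R) : set (R * R) := [set (x, f x) | x in `[0, 1]].

Definition lincomb (A : Type) (n : nat) (idx : 'I_n -> A) (c : 'I_n -> R)
    (b : A -> R -> R) : R -> R :=
  fun x => \sum_(k < n) c k * b (idx k) x.

(* M is a linear subspace of C[0,1] of (Hamel) dimension |A|:
   it has a Hamel basis indexed injectively by A (linearly independent:
   every finite subfamily is independent; spanning: M is the set of finite
   linear combinations) *)
Definition has_dim (M : set (R -> R)) (A : Type) : Prop :=
  M `<=` C01 /\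
  exists b : A -> (R -> R),
    injective b /\
    (forall (n : nat) (idx : 'I_n -> A) (c : 'I_n -> R), injective idx ->
        lincomb idx c b = zerof -> forall k, c k = 0) /\
    M = [set f | exists (n : nat) (idx : 'I_n -> A) (c : 'I_n -> R),
                   f = lincomb idx c b].

Definition closed_C01 (M : set (R -> R)) : Prop :=
  forall g, C01 g ->
    (forall e : R, 0 < e -> exists2 f, M f & forall x, 0 <= x <= 1 -> `|f x - g x| <= e) ->
    M g.

Definition lineable (X : set (R -> R)) (A : Type) : Prop :=
  exists M, has_dim M A /\ M `<=` X `|` [set zerof].

(* (alpha,beta)-spaceable, alpha = |A|, beta = |B| *)
Definition spaceable (X : set (R -> R)) (A B : Type) : Prop :=
  lineable X A /\
  forall W, has_dim W A -> W `<=` X `|` [set zerof] ->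
    exists W', W `<=` W' /\ closed_C01 W' /\ has_dim W' B /\ W' `<=` X `|` [set zerof].

Definition H_set (s : R) : set (R -> R) := [set f | C01 f /\ dimH (graph f) = s%:E].
Definition UB_set (s : R) : set (R -> R) := [set f | C01 f /\ upper_box_dim (graph f) = s%:E].
Definition LB_set (s : R) : set (R -> R) := [set f | C01 f /\ lower_box_dim (graph f) = s%:E].
Definition B_set (s : R) : set (R -> R) :=
  [set f | C01 f /\ lower_box_dim (graph f) = s%:E /\ upper_box_dim (graph f) = s%:E].

End Defs.

Definition card_lt_type (A B : Type) : Prop :=
  ([set: A] #<= [set: B])%card /\ ~ ([set: B] #<= [set: A])%card.

(* Main.v *)
Set Warnings "-all".
Require Import Defs.
From HB Require Import structures.
From mathcomp Require Import all_boot all_order all_algebra.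
From mathcomp Require Import all_classical all_reals all_analysis.
From mathcomp Require Import ring lra.
Import Order.TTheory GRing.Theory Num.Theory.
Import numFieldNormedType.Exports.
Local Open Scope classical_set_scope.
Local Open Scope ring_scope.

Lemma nat_surj (A : Type) : infinite_set [set: A] -> exists g : A -> nat, forall k, exists a, g a = k.
Proof.
move=> /infiniteP/pcard_surjP[g gs]; exists g => k.
by have [a _ <-] := gs k I; exists a.
Qed.

Lemma group_lincomb (R : realType) (A : Type) (n : nat) (idx : 'I_n -> A) (c : 'I_n -> R) :
  exists m (idx' : 'I_m -> A) (c' : 'I_m -> R), injective idx' /\
    forall G : A -> R, \sum_(k < n) c k * G (idx k) = \sum_(j < m) c' j * G (idx' j).
Proof.
elim: n idx c => [|n IH] idx c.
  exists 0%N, (fun j : 'I_0 => match j with Ordinal _ p => False_rect _ (notF p) end), (fun _ => 0).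
  by split; [move=> [] | move=> G; rewrite !big_ord0].
have [m [idx' [c' [inj' H']]]] := IH (fun k => idx (lift ord0 k)) (fun k => c (lift ord0 k)).
have [[j0 hj0]|nex] := pselect (exists j, idx' j = idx ord0).
  exists m, idx', (fun j => c' j + (if j == j0 then c ord0 else 0)); split => // G.
  rewrite big_ord_recl H'.
  under [RHS]eq_bigr do rewrite mulrDl.
  rewrite big_split /= addrC; congr (_ + _).
  rewrite (bigD1 j0) //= eqxx big1 ?addr0; first by rewrite hj0.
  by move=> j /negbTE ->; rewrite mul0r.
exists m.+1, (fun j => match unlift ord0 j with Some j' => idx' j' | None => idx ord0 end),
  (fun j => match unlift ord0 j with Some j' => c' j' | None => c ord0 end); split.
  move=> j1 j2; case: unliftP => [j1'|] ->; case: unliftP => [j2'|] -> //.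
  - by move=> /inj' ->.
  - by move=> e; exfalso; apply: nex; exists j1'.
  - by move=> e; exfalso; apply: nex; exists j2'.
move=> G; rewrite big_ord_recl [RHS]big_ord_recl unlift_none H'; congr (_ + _).
by apply: eq_bigr => j _; rewrite liftK.
Qed.

Section Main.
Variable R : realType.

Lemma C01_addc (f : R -> R) t : C01 f -> C01 (fun x => f x + t).
Proof.
move=> [cf [h0 h1]]; split; [|split].
- by move=> x; apply: cvgD; [exact: cf | exact: cvg_cst].
- by move=> x x0; rewrite h0.
- by move=> x x1; rewrite h1.
Qed.

Lemma C01_cst (t : R) : C01 (fun _ => t).
Proof. split; last by split. move=> x. exact: cvg_cst. Qed.

Lemma C01_bound (f : R -> R) : C01 f -> exists B, 0 <= B /\ forall x, 0 <= x <= 1 -> `|f x| <= B.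
Proof.
move=> [cf _].
have [c _ hc] := @EVT_max R (fun x => `|f x|) 0 1 ler01
   (continuous_subspaceT (fun x => continuous_comp (cf x) (@norm_continuous _ R^o (f x)))).
exists `|f c|; split => // x hx; apply: hc; by rewrite in_itv.
Qed.

Lemma lincomb_split (A : Type) n (idx : 'I_n -> A) (l : 'I_n -> R) (b : A -> R -> R) (K : A -> R) :
  lincomb idx l (fun a x => b a x + K a) =
  (fun x => lincomb idx l b x + \sum_(k < n) l k * K (idx k)).
Proof.
apply/funext => x; rewrite /lincomb -big_split; apply: eq_bigr => k _.
by rewrite mulrDr.
Qed.

Lemma not_spaceable_gen (X : set (R -> R)) (A B : Type) :
  infinite_set [set: A] ->
  (forall f t, X f -> X (fun x => f x + t)) ->
  (forall t, ~ X (fun _ => t)) ->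
  ~ spaceable X A B.
Proof.
move=> Ainf P1 P2 [[M [[MC [b [binj [bind Mdef]]]] MX]] Hsp].
have bM a : M (b a).
  rewrite Mdef; exists 1%N, (fun _ => a), (fun _ => 1).
  by apply/funext => x; rewrite /lincomb big_ord1 mul1r.
have lM n (idx : 'I_n -> A) l : M (lincomb idx l b) by rewrite Mdef; exists n, idx, l.
have /choice[Bf HB] : forall a, exists B, 0 <= B /\ forall x, 0 <= x <= 1 -> `|b a x| <= B.
  by move=> a; apply: C01_bound; apply: MC.
have [g gs] := @nat_surj A Ainf.
pose K a := ((g a).+1)%:R * (1 + Bf a).
have Kgt0 a : 0 < K a by rewrite mulr_gt0 // ltr_wpDr //; case: (HB a).
pose c a x := b a x + K a.
have cst0 (t : R) : (X `|` [set @zerof R]) (fun _ => t) -> t = 0.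
  case=> [/P2 //|/= e]; by have := congr1 (fun f => f 0) e.
have Xc (f : R -> R) (t : R) : (X `|` [set @zerof R]) f -> f = (fun _ => t) -> f = @zerof R.
  by move=> hf e; rewrite e in hf *; rewrite (cst0 _ hf).
set W := [set f | exists n (idx : 'I_n -> A) (l : 'I_n -> R), f = lincomb idx l c].
have WX : W `<=` X `|` [set @zerof R].
  move=> w [n [idx [l ->]]]; rewrite lincomb_split.
  have [m0|mn0] := pselect (lincomb idx l b = @zerof R).
    have [m' [idx' [l' [inj' HG]]]] := @group_lincomb R A n idx l.
    have l0 : forall k, l' k = 0.
      apply: (bind _ idx' l' inj'); apply/funext => x.
      by rewrite /lincomb -(HG (fun a => b a x)); have := congr1 (fun f => f x) m0.
    right; apply/funext => x /=; rewrite m0 HG big1 ?addr0 //.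
    by move=> k _; rewrite l0 mul0r.
  left; apply: P1; by case: (MX _ (lM _ idx l)).
have cinj : injective c.
  move=> a1 a2 e12; have [//|nea] := pselect (a1 = a2); exfalso.
  pose idx2 := fun k : 'I_2 => if val k == 0%N then a1 else a2.
  pose l2 := fun k : 'I_2 => if val k == 0%N then (1 : R) else -1.
  have i2 : injective idx2.
    move=> [i hi] [j hj]; rewrite /idx2 /=.
    case: i hi => [|[|i]] // hi; case: j hj => [|[|j]] // hj e; try by apply/val_inj.
    by exfalso; move: e => /= e; exact: (nea (esym e)).
  have m2 : lincomb idx2 l2 b = (fun _ => K a2 - K a1).
    apply/funext => x; rewrite /lincomb big_ord_recr big_ord1 /= /idx2 /l2 /=.
    have := congr1 (fun f => f x) e12; rewrite /c /= => h.
    rewrite mul1r mulN1r; lra.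
  have := bind _ idx2 l2 i2 (Xc _ _ (MX _ (lM _ idx2 l2)) m2) ord0.
  by rewrite /l2 /=; apply/eqP; rewrite oner_eq0.
have cind : forall (n : nat) (idx : 'I_n -> A) (l : 'I_n -> R), injective idx ->
    lincomb idx l c = @zerof R -> forall k, l k = 0.
  move=> n idx l iidx; rewrite lincomb_split => H.
  apply: (bind _ idx l iidx); apply: (Xc _ (- \sum_(k < n) l k * K (idx k)) (MX _ (lM _ idx l))).
  apply/funext => x; have := congr1 (fun f => f x) H; rewrite /zerof => /eqP.
  by rewrite addr_eq0 => /eqP.
have WC : W `<=` @C01 R.
  move=> w [n [idx [l ->]]]; rewrite lincomb_split; apply: C01_addc; exact: MC (lM _ _ _).
have [W' [WW' [cW' [_ W'X]]]] := Hsp W (conj WC (ex_intro _ c (conj cinj (conj cind erefl)))) WX.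
have W'1 : W' (fun _ => 1).
  apply: cW'; first exact: C01_cst.
  move=> e e0.
  have [a ga] := gs (Num.Def.trunc e^-1).
  have Ka0 : K a != 0 by rewrite gt_eqF.
  exists (lincomb (fun _ : 'I_1 => a) (fun _ => (K a)^-1) c).
    by apply: WW'; exists 1%N, (fun _ => a), (fun _ => (K a)^-1).
  move=> x hx; rewrite /lincomb big_ord1 /c.
  have -> : (K a)^-1 * (b a x + K a) - 1 = b a x / K a by field.
  rewrite normrM normfV (gtr0_norm (Kgt0 a)) ler_pdivrMr //.
  have [B0 HBa] := HB a.
  apply: (le_trans (HBa x hx)).
  have h1 : 1 <= e * ((g a).+1)%:R.
    rewrite -[X in X <= _](mulfV (lt0r_neq0 e0)) ler_pM2l // ga; apply/ltW; exact: truncnS_gt.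
  rewrite /K mulrA; apply: (le_trans _ (ler_wpM2r _ h1)); last by rewrite addr_ge0.
  by rewrite mul1r lerDr.
case: (W'X _ W'1) => [/P2 //|/= e].
by have := congr1 (fun f => f 0) e; rewrite /zerof => /eqP; rewrite oner_eq0.
Qed.
End Main.

Section Transl.
Variable R : realType.
Local Open Scope ereal_scope.

Definition isom (phi : R * R -> R * R) := forall p q, dist2 (phi p) (phi q) = dist2 p q.

Lemma diam_isom phi (U : set (R * R)) : isom phi -> diam (phi @` U) = diam U.
Proof.
move=> iso; rewrite /diam.
have -> : (phi @` U = set0) = (U = set0).
  apply/propext; split => [/image_set0_set0 //|->]; by rewrite image_set0.
destruct (pselect (U = set0)) => //; congr ereal_sup; apply/seteqP; split.
- move=> _ [[p q] [[p' Up' <-] [q' Uq' <-]] <-] /=.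
  by exists (p', q') => //=; rewrite iso.
- move=> _ [[p q] [Up Uq] <-] /=.
  by exists (phi p, phi q) => //=; [split; exists p + exists q | rewrite iso].
Qed.

Lemma diam_pow_isom phi (U : set (R * R)) t : isom phi -> diam_pow (phi @` U) t = diam_pow U t.
Proof.
move=> iso; rewrite /diam_pow diam_isom //.
have -> : (phi @` U = set0) = (U = set0).
  apply/propext; split => [/image_set0_set0 //|->]; by rewrite image_set0.
by [].
Qed.

Lemma hd_isom_le phi (F G : set (R * R)) t d : isom phi -> F `<=` phi @` G ->
  hausdorff_delta t d F <= hausdorff_delta t d G.
Proof.
move=> iso FG; rewrite /hausdorff_delta; apply: le_ereal_inf.
move=> _ [U [cov dd] <-]; exists (fun i => phi @` U i).
  split.
    move=> p /FG [q /cov [i _ Uiq] <-]; exists i => //; exists q => //.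
  by move=> i; rewrite diam_isom.
by apply: eq_eseriesr => i _; exact: diam_pow_isom.
Qed.

Lemma cn_isom_le phi (F G : set (R * R)) d : isom phi -> F `<=` phi @` G ->
  cover_number d F <= cover_number d G.
Proof.
move=> iso FG; rewrite /cover_number; apply: le_ereal_inf.
move=> _ [n [U [cov dd]] <-]; exists n => //; exists (fun i => phi @` U i).
split.
  move=> p /FG [q /cov [i Ii Uiq] <-]; exists i => //; exists q => //.
by move=> i Hi; rewrite diam_isom // dd.
Qed.

Definition tau (t : R) (p : R * R) := (p.1, (p.2 + t)%R).

Lemma tau_isom t : isom (tau t).
Proof. by move=> p q; rewrite /dist2 /tau /=; congr (Num.sqrt (_ + _)); congr (GRing.exp _ 2); ring. Qed.

Lemma tauK t (G : set (R * R)) : G `<=` tau (- t)%R @` (tau t @` G).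
Proof.
move=> p Gp; exists (tau t p); first by exists p.
by rewrite /tau /= addrK; case: p {Gp}.
Qed.

Lemma hd_tau t s d G : hausdorff_delta s d (tau t @` G) = hausdorff_delta s d G.
Proof.
apply/eqP; rewrite eq_le; apply/andP; split.
  by apply: (@hd_isom_le (tau t) _ G s d (tau_isom t)) => x.
exact: (@hd_isom_le (tau (- t)%R) G _ s d (tau_isom (- t)%R) (tauK t G)).
Qed.

Lemma cn_tau t d G : cover_number d (tau t @` G) = cover_number d G.
Proof.
apply/eqP; rewrite eq_le; apply/andP; split.
  by apply: (@cn_isom_le (tau t) _ G d (tau_isom t)) => x.
exact: (@cn_isom_le (tau (- t)%R) G _ d (tau_isom (- t)%R) (tauK t G)).
Qed.

Lemma dimH_tau t G : dimH (tau t @` G) = dimH G.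
Proof.
have E : forall s, hausdorff_measure s (tau t @` G) = hausdorff_measure s G.
  move=> s; rewrite /hausdorff_measure; congr ereal_sup; congr image.
  by apply/funext => d; rewrite hd_tau.
rewrite /dimH; congr ereal_inf; congr image; apply/funext => s.
by rewrite /= E.
Qed.

Lemma br_tau t G : box_ratio (tau t @` G) = box_ratio G.
Proof. by apply/funext => d; rewrite /box_ratio cn_tau. Qed.

Lemma ubd_tau t G : upper_box_dim (tau t @` G) = upper_box_dim G.
Proof. by rewrite /upper_box_dim br_tau. Qed.

Lemma lbd_tau t G : lower_box_dim (tau t @` G) = lower_box_dim G.
Proof. by rewrite /lower_box_dim br_tau. Qed.

Lemma graph_tau (f : R -> R) t : graph (fun x => f x + t)%R = tau t @` graph f.
Proof.
apply/seteqP; split.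
  by move=> _ [x hx <-]; exists (x, f x) => //; exists x.
by move=> _ [_ [x hx <-] <-]; exists x.
Qed.

End Transl.

Section Seg.
Variable R : realType.

Definition S0 : set (R * R) := graph (@zerof R).

Lemma dist2_seg (x y : R) : dist2 (x, 0) (y, 0) = `|x - y|.
Proof. by rewrite /dist2 /= subrr expr0n /= addr0 sqrtr_sqr. Qed.

Lemma diam_ge0 (U : set (R * R)) : (0 <= diam U)%E.
Proof.
rewrite /diam; destruct (pselect (U = set0)) as [e0|nU]; first by [].
have /set0P [p Up] : U != set0 by apply/eqP.
apply: le_ereal_sup_tmp; exists (dist2 p p)%:E; first by exists (p, p).
by rewrite /dist2 !subrr expr0n addr0 sqrtr0.
Qed.

Lemma diam_le (U : set (R * R)) d : 0 <= d ->
  (forall p q, U p -> U q -> dist2 p q <= d) -> (diam U <= d%:E)%E.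
Proof.
move=> d0 H; rewrite /diam; destruct (pselect (U = set0)) as [e0|nU]; first by rewrite lee_fin.
apply: ge_ereal_sup => _ [[p q] [Up Uq] <-]; rewrite lee_fin; exact: H.
Qed.

Lemma diam_pow_ge0 (U : set (R * R)) t : (0 <= diam_pow U t)%E.
Proof.
rewrite /diam_pow; destruct (pselect (U = set0)) as [e0|nU]; first by [].
by case: (diam U) => [r| |] //=; rewrite lee_fin powR_ge0.
Qed.

Lemma diam_pow_le (U : set (R * R)) d t : 0 <= d -> 0 <= t ->
  (forall p q, U p -> U q -> dist2 p q <= d) -> (diam_pow U t <= (d `^ t)%:E)%E.
Proof.
move=> d0 t0 H; have := @diam_le U d d0 H; have := @diam_ge0 U.
rewrite /diam_pow; destruct (pselect (U = set0)) as [e0|nU]; first by rewrite lee_fin powR_ge0.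
case: (diam U) => [r| |] //= r0 rd; rewrite ?lee_fin in r0 rd *.
  by apply: ge0_ler_powR => //; rewrite nnegrE.

Qed.

Definition piece (d : R) (i : nat) : set (R * R) :=
  [set (x, 0) | x in `[i%:R * d, i.+1%:R * d]].

Lemma piece_dist d i p q : piece d i p -> piece d i q -> dist2 p q <= d.
Proof.
move=> [x hx <-] [y hy <-]; rewrite dist2_seg.
move: hx hy; rewrite /= !in_itv /= => /andP[x1 x2] /andP[y1 y2].
have e : i.+1%:R * d = i%:R * d + d by rewrite -addn1 natrD mulrDl mul1r.
rewrite e in x2 y2; rewrite ler_norml; apply/andP; split; lra.
Qed.

Lemma piece_cover d : 0 < d ->
  S0 `<=` \bigcup_(i in `I_((Num.Def.trunc d^-1).+1)) piece d i.
Proof.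
move=> d0 _ [x hx <-]; move: hx; rewrite /= in_itv /= => /andP[x0 x1].
have xd0 : 0 <= x / d by rewrite divr_ge0 // ltW.
exists (Num.Def.trunc (x / d)).
  rewrite /= ltnS; apply: le_truncn; rewrite ler_pdivrMr // mulVf ?gt_eqF //.
exists x => //; rewrite /= in_itv /=.
have /andP[h1 h2] := truncn_itv xd0.
rewrite ler_pdivlMr // in h1; rewrite ltr_pdivrMr // in h2.
by rewrite h1 ltW.
Qed.

End Seg.

Section SegDim.
Variable R : realType.

Lemma hd_S0 (t dl : R) : 1 < t -> 0 < dl -> (hausdorff_delta t dl (@S0 R) <= 0)%E.
Proof.
move=> t1 dl0; apply/lee_addgt0Pr => eta eta0; rewrite add0e.
have t0 : 0 < t - 1 by rewrite subr_gt0.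
set q := (eta / 2) `^ (t - 1)^-1.
have q0 : 0 < q by rewrite powR_gt0 // divr_gt0.
set d := Order.min dl (Order.min 1 q).
have d0 : 0 < d by rewrite !lt_min dl0 q0 ltr01.
have ddl : d <= dl by rewrite ge_min lexx.
have d1 : d <= 1 by rewrite ge_min; apply/orP; right; rewrite ge_min lexx.
have dq : d <= q by rewrite ge_min; apply/orP; right; rewrite ge_min lexx orbT.
set N := (Num.Def.trunc d^-1).+1.
pose V i := if (i < N)%N then @piece R d i else set0.
have V0 i : (N <= i)%N -> diam_pow (V i) t = 0%E.
  rewrite /V leqNgt => /negbTE ->; rewrite /diam_pow.
  by destruct (pselect (@set0 (R * R) = set0)).
apply: le_trans (ereal_inf_lbound _) _.
  exists V => //; split.
    move=> p /(@piece_cover R d d0) [i Ii Pi]; exists i => //.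
    by rewrite /V; move: Ii => /= ->.
  move=> i; rewrite /V; case: ifP => _.
    apply: le_trans (@diam_le R _ d (ltW d0) (@piece_dist R d i)) _; by rewrite lee_fin.
  by rewrite /diam; destruct (pselect (@set0 (R * R) = set0)) => //; rewrite lee_fin ltW.
rewrite (nneseries_split 0 N); last by move=> k _; exact: diam_pow_ge0.
rewrite add0n eseries0 ?adde0; last by move=> i Ni _; exact: V0.
rewrite big_mkord; apply: le_trans.
  apply: (@lee_sum _ _ _ (fun _ => (d `^ t)%:E)) => i _.
  rewrite /V ltn_ord; apply: (@diam_pow_le R _ d t (ltW d0)); first by rewrite ltW // (lt_trans ltr01).
  exact: (@piece_dist R d i).
rewrite sumEFin lee_fin sumr_const card_ord -mulr_natl.
have e1 : d `^ t = d * d `^ (t - 1).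
  rewrite -[X in X * _](powRr1 (ltW d0)) -powRD; first by rewrite addrC subrK.
  by apply/implyP => _; rewrite gt_eqF.
have e2 : d `^ (t - 1) <= eta / 2.
  apply: (le_trans (ge0_ler_powR (ltW t0) _ _ dq)); [by rewrite nnegrE ltW | by rewrite nnegrE ltW | ].
  by rewrite /q -powRrM mulVf ?gt_eqF // powRr1 // divr_ge0 // ltW.
have p0 : 0 <= d `^ (t - 1) by exact: powR_ge0.
have hN : N%:R <= d^-1 + 1.
  rewrite /N -addn1 natrD lerD2r truncn_le invr_ge0 ltW //.
have hNd : N%:R * d <= 1 + d.
  rewrite -(ler_pM2r d0) in hN; apply: le_trans hN _.
  by rewrite mulrDl mulVf ?gt_eqF // mul1r.
rewrite e1 mulrA; set P := d `^ (t - 1) in e2 p0 *; set Q := N%:R * d in hNd *.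
nra.
Qed.

Lemma hd_ge0 (t dl : R) F : (0 <= hausdorff_delta t dl F)%E.
Proof.
apply: le_ereal_inf_tmp => _ [U _ <-]; apply: nneseries_ge0 => n _ _.
exact: diam_pow_ge0.
Qed.

Lemma hm_S0 (t : R) : 1 < t -> hausdorff_measure t (@S0 R) = 0%E.
Proof.
move=> t1; apply/eqP; rewrite eq_le; apply/andP; split.
  apply: ge_ereal_sup => _ [dl hdl <-]; apply: hd_S0 => //.
  by move: hdl; rewrite /= in_itv /= andbT.
apply: le_ereal_sup_tmp; exists (hausdorff_delta t 1 (@S0 R)); last exact: hd_ge0.
by exists 1 => //; rewrite /= in_itv /= andbT ltr01.
Qed.

Lemma dimH_S0 (t : R) : 1 < t -> (dimH (@S0 R) <= t%:E)%E.
Proof.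
move=> t1; apply: ereal_inf_lbound; exists t => //; split; last exact: hm_S0.
by rewrite ltW // (lt_trans ltr01).
Qed.

End SegDim.

Section SegBox.
Variable R : realType.

Lemma cn_S0 (dl : R) : 0 < dl ->
  (cover_number dl (@S0 R) <= ((Num.Def.trunc dl^-1).+1)%:R%:E)%E.
Proof.
move=> dl0; apply: ereal_inf_lbound; exists (Num.Def.trunc dl^-1).+1 => //.
exists (@piece R dl); split; first exact: piece_cover.
by move=> i _; apply: (@diam_le R _ dl (ltW dl0)); exact: (@piece_dist R dl i).
Qed.

Lemma cn_ge0 (dl : R) F : (0 <= cover_number dl F)%E.
Proof. by apply: le_ereal_inf_tmp => _ [n _ <-]; rewrite lee_fin ler0n. Qed.

Lemma br_S0 (t dl : R) : 1 < t -> 0 < dl -> dl < expR (- ln 2 / (t - 1)) -> dl < 1 ->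
  (box_ratio (@S0 R) dl <= t%:E)%E.
Proof.
move=> t1 dl0 dle dl1; rewrite /box_ratio.
have := @cn_S0 dl dl0; have := @cn_ge0 dl (@S0 R).
case: cover_number => [r| |] //= r0 rN; rewrite ?lee_fin in r0 rN *.
have t0 : 0 < t - 1 by rewrite subr_gt0.
have lnd : ln dl < 0 by rewrite ln_lt0 // dl0 dl1.
have hN : (Num.Def.trunc dl^-1).+1%:R <= 2 / dl.
  rewrite -addn1 natrD.
  have h : (Num.Def.trunc dl^-1)%:R <= dl^-1 by rewrite truncn_le invr_ge0 ltW.
  have : 1 <= dl^-1 by rewrite invf_ge1 // ltW.
  lra.
have hlr : ln r <= ln 2 - ln dl.
  have l2 : 0 <= ln (2 : R) by rewrite ln_ge0 // ler1n.
  have [r0'|rp] := leP r 0; first by rewrite ln0 //; lra.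
  rewrite -ln_div ?posrE // ler_ln ?posrE ?divr_gt0 //.
  exact: le_trans rN hN.
have hd : ln dl * (t - 1) < - ln 2.
  rewrite -ltr_pdivlMr //; rewrite -[X in _ < X]expRK ltr_ln ?posrE ?expR_gt0 //.
rewrite ler_pdivrMr ?oppr_gt0 //; nra.
Qed.

Definition e0 (t : R) := Order.min (expR (- ln 2 / (t - 1))) (1 / 2).

Lemma e0_pos t : 0 < e0 t.
Proof. by rewrite lt_min expR_gt0 divr_gt0. Qed.

Lemma e0_lt1 t : e0 t < 1.
Proof. by rewrite gt_min; apply/orP; right; rewrite ltr_pdivrMr // mul1r ltr1n. Qed.

Lemma br_S0' (t dl : R) : 1 < t -> 0 < dl -> dl < e0 t -> (box_ratio (@S0 R) dl <= t%:E)%E.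
Proof.
move=> t1 dl0; rewrite lt_min => /andP[h1 h2]; apply: br_S0 => //.
by apply: lt_trans h2 _; rewrite ltr_pdivrMr // mul1r ltr1n.
Qed.

Lemma ubd_S0 (t : R) : 1 < t -> (upper_box_dim (@S0 R) <= t%:E)%E.
Proof.
move=> t1; apply: le_trans (ereal_inf_lbound _) _.
  by exists (e0 t) => //; rewrite /= in_itv /= e0_pos e0_lt1.
apply: ge_ereal_sup => _ [dl hdl <-]; move: hdl; rewrite /= in_itv /= => /andP[h1 h2].
exact: br_S0'.
Qed.

Lemma lbd_S0 (t : R) : 1 < t -> (lower_box_dim (@S0 R) <= t%:E)%E.
Proof.
move=> t1; apply: ge_ereal_sup => _ [e he <-]; move: he; rewrite /= in_itv /= => /andP[h1 h2].
have m0 : 0 < Order.min e (e0 t) by rewrite lt_min h1 e0_pos.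
have me : Order.min e (e0 t) <= e by rewrite ge_min lexx.
have me0 : Order.min e (e0 t) <= e0 t by rewrite ge_min lexx orbT.
set m := Order.min e (e0 t) in m0 me me0 *.
apply: le_trans (ereal_inf_lbound _) (@br_S0' t (m / 2) t1 _ _).
- by exists (m / 2) => //; rewrite /= in_itv /=; apply/andP; split; lra.
- lra.
- lra.
Qed.

End SegBox.

Section Final.
Variable R : realType.

Lemma graph_cst (t : R) : graph (fun _ => t) = @tau R t @` (@S0 R).
Proof.
rewrite /S0 -graph_tau; congr graph; apply/funext => x; by rewrite /zerof add0r.
Qed.

Lemma C01_addc' (f : R -> R) t : C01 (fun x => f x + t) -> C01 f.
Proof.
move=> h; have := @C01_addc R _ (- t) h.
by have -> : (fun x => f x + t + - t) = f by apply/funext => x; rewrite addrK.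
Qed.

Lemma ts (s : R) : 1 < s -> 1 < (1 + s) / 2 /\ (((1 + s) / 2)%:E < s%:E)%E.
Proof. by move=> s1; rewrite lte_fin; split; lra. Qed.

End Final.

Theorem corollary2p11 (R : realType) (s : R) (hs : 1 < s <= 2)
  (A : Type) (hA : infinite_set [set: A]) :
  forall B : Type, card_lt_type A B ->
    ~ spaceable (H_set s) A B /\ ~ spaceable (UB_set s) A B /\
    ~ spaceable (LB_set s) A B /\ ~ spaceable (B_set s) A B.
Proof.
move=> B _; have /andP[s1 _] := hs.
have [t1 ts'] := @ts R s s1.
split; [|split; [|split]]; apply: not_spaceable_gen => //.
- move=> f t [Cf Df]; split; first exact: C01_addc.
  by rewrite graph_tau dimH_tau.
- move=> t [_ Df]; move: Df; rewrite graph_cst dimH_tau => Df.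
  by have := le_lt_trans (@dimH_S0 R _ t1) ts'; rewrite Df ltxx.
- move=> f t [Cf Df]; split; first exact: C01_addc.
  by rewrite graph_tau ubd_tau.
- move=> t [_ Df]; move: Df; rewrite graph_cst ubd_tau => Df.
  by have := le_lt_trans (@ubd_S0 R _ t1) ts'; rewrite Df ltxx.
- move=> f t [Cf Df]; split; first exact: C01_addc.
  by rewrite graph_tau lbd_tau.
- move=> t [_ Df]; move: Df; rewrite graph_cst lbd_tau => Df.
  by have := le_lt_trans (@lbd_S0 R _ t1) ts'; rewrite Df ltxx.
- move=> f t [Cf [Df Ef]]; split; first exact: C01_addc.
  by rewrite graph_tau lbd_tau ubd_tau.
- move=> t [_ [Df _]]; move: Df; rewrite graph_cst lbd_tau => Df.
  by have := le_lt_trans (@lbd_S0 R _ t1) ts'; rewrite Df ltxx.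
Qed.
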